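(* Let $N\ge2$ and let $\mathbb{P}_N$ be the path graph on servers $S_1,\dots,S_N$ (edges $\{S_i,S_{i+1}\}$, $i\in[N-1]$). Then for every $r\ge1$, $$\mathscr{C}\left(\mathbb{P}_N^{(r)}\right)\ \ge\ \frac{2}{N}\cdot\frac{1}{2-\frac{1}{2^{r-1}}}.$$
   Context: Multigraph-based PIR model. There are $N$ non-colluding servers $S_1,\dots,S_N$. For a simple graph $G$ on these servers with $K'$ edges, $G^{(r)}$ is the $r$-multigraph obtained by replacing each edge by $r$ parallel edges. There are $K=rK'$ files, each independent and uniform on $\mathbb{F}_2^{L}$; for each edge of $G$, a distinct set of $r$ files is stored exactly on its two endpoints. In a PIR scheme, a user privately chooses a desired file index $\theta$ and generates queries $Q_1,\dots,Q_N$ independent of all files; answer $A_i$ is a deterministic function of $Q_i$ and the files on $S_i$. Reliability: $W_\theta$ is a function of all answers and queries. Privacy: for every server $i$ and every $\theta$, the distribution of $(Q_i^{(\theta)},A_i^{(\theta)},\text{files on }S_i)$ does not depend on $\theta$. The rate is $L/\sum_i H(A_i)$ and the capacity $\mathscr{C}(G^{(r)})$ is the supremum of rates over all schemes, with $L$ arbitrarily large. *)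

(* Defs.v *)
From HB Require Import structures.
From mathcomp Require Import all_boot all_order all_algebra.
From mathcomp Require Import boolp classical_sets reals ereal exp.
Set Implicit Arguments. Unset Strict Implicit. Unset Printing Implicit Defensive.
Import Order.TTheory GRing.Theory Num.Theory.
Local Open Scope ring_scope.

(* In G^(r) every edge k carries r files (k,t), t < r, each stored
   exactly on the two endpoints of k. *)
Definition multigraph_stor (N K' r : nat) (ends : 'I_K' -> 'I_N * 'I_N)
  (f : 'I_K' * 'I_r) (i : 'I_N) : bool :=
  (i == (ends f.1).1) || (i == (ends f.1).2).

Lemma path_lt1 (N : nat) (k : 'I_N.-1) : (k < N)%N.
Proof. case: k => k /=; case: N => [|N] //= Hk; exact: (leq_trans Hk). Qed.
Lemma path_lt2 (N : nat) (k : 'I_N.-1) : (k.+1 < N)%N.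
Proof. case: k => k /=; case: N => [|N] //=. Qed.

(* Path graph P_N: edges {S_k, S_(k+1)} for k = 0 .. N-2 (0-indexed). *)
Definition path_ends (N : nat) (k : 'I_N.-1) : 'I_N * 'I_N :=
  (Ordinal (path_lt1 k), Ordinal (path_lt2 k)).

Section PIR.
Variables (R : realType) (N : nat) (F : finType) (stor : F -> 'I_N -> bool).
Variable L : nat.

Definition file_t := 'rV['F_2]_L.
Definition files_t := {ffun F -> file_t}.

Definition restr (i : 'I_N) (w : files_t) : files_t :=
  [ffun f => if stor f i then w f else 0].

(* files are independent and uniform on F_2^L *)
Definition unif : R := (#|{: files_t}|%:R)^-1.

(* A scheme: query alphabet qT, answer alphabet aT, for each desired index
   theta a distribution of the query tuple (Q_1..Q_N) (independent of files),
   answer functions and decoding functions. *)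
Record scheme := Scheme {
  qT : finType;
  aT : finType;
  qdist : F -> {ffun {ffun 'I_N -> qT} -> R};
  ans : 'I_N -> qT -> files_t -> aT;
  dec : F -> {ffun 'I_N -> qT} -> ('I_N -> aT) -> file_t }.
Arguments ans : clear implicits.
Arguments dec : clear implicits.




Variable S : scheme.
Notation qtup := {ffun 'I_N -> qT S}.

Definition prob_view (th : F) (i : 'I_N) (q : qT S) (a : aT S) (v : files_t) : R :=
  \sum_(qs : qtup) \sum_(w : files_t)
     qdist S th qs * unif *
     ((qs i == q) && (ans S i (qs i) w == a) && (restr i w == v))%:R.

Definition prob_ans (th : F) (i : 'I_N) (a : aT S) : R :=
  \sum_(qs : qtup) \sum_(w : files_t)
     qdist S th qs * unif * (ans S i (qs i) w == a)%:R.

Definition log2 (x : R) : R := ln x / ln 2.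

Definition entropy_ans (th : F) (i : 'I_N) : R :=
  - \sum_(a : aT S) (let p := prob_ans th i a in
                     if p == 0 then 0 else p * log2 p).

Definition valid_scheme : Prop :=
  [/\
      (forall th qs, 0 <= qdist S th qs),
      (forall th, \sum_(qs : qtup) qdist S th qs = 1),
      (forall i q w w', restr i w = restr i w' -> ans S i q w = ans S i q w'),
      (forall th qs w, 0 < qdist S th qs ->
          dec S th qs (fun i => ans S i (qs i) w) = w th) &
      (forall i th th' q a v, prob_view th i q a v = prob_view th' i q a v)].

End PIR.

(* Achievable rates L / sum_i H(A_i) (by privacy H(A_i) does not depend on
   theta; we require the value for every theta). *)
Definition rates (R : realType) (N : nat) (F : finType)
  (stor : F -> 'I_N -> bool) : set R :=
  [set x | exists (L : nat) (S : scheme R N F L),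
      valid_scheme stor S /\
      forall th : F, x = L%:R / \sum_(i < N) entropy_ans S th i].

Definition capacity (R : realType) (N : nat) (F : finType)
  (stor : F -> 'I_N -> bool) : \bar R :=
  ereal_sup (EFin @` rates stor).

Definition capacity_multigraph (R : realType) (N K' : nat)
  (ends : 'I_K' -> 'I_N * 'I_N) (r : nat) : \bar R :=
  capacity R (@multigraph_stor N K' r ends).

(* Main.v *)
Require Import Defs.
From HB Require Import structures.
From mathcomp Require Import all_boot all_order all_algebra.
From mathcomp Require Import boolp classical_sets reals ereal exp.
From mathcomp Require Import zify ring lra.
Set Implicit Arguments. Unset Strict Implicit. Unset Printing Implicit Defensive.
Import Order.TTheory GRing.Theory Num.Theory.
Local Open Scope ring_scope.

Lemma F2_cases (x : 'F_2) : x = 0 \/ x = 1.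
Proof. case: x => [[|[|m]]] //= H; [left|right]; by apply/val_inj. Qed.

Lemma F2_dbl (x : 'F_2) : x + x = 0.
Proof. case: (F2_cases x) => ->; [by rewrite addr0| by apply/val_inj]. Qed.

Section Sch.
Variables (N r : nat).
Definition V := 'rV['F_2]_r.
Definition LL := #|V|.
Definition FF := ('I_N.-1 * 'I_r)%type.
Definition CC := {ffun 'I_r -> V}.
Definition QQ := (CC * CC)%type.
Definition Vn := {x : V | x != 0}.
Definition AA := {ffun Vn -> 'F_2}.
Definition Sd := {ffun 'I_N.-1 -> CC}.
Definition FL := files_t FF LL.

Lemma V_dbl (x : V) : x + x = 0.
Proof. by apply/matrixP => i j; rewrite !mxE F2_dbl. Qed.

Definition bitv (v : file_t LL) (x : V) : 'F_2 := v ord0 (enum_rank x).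

Definition Ef (k : nat) (c : CC) (w : FL) (s : V) : 'F_2 :=
  match (insub k : option 'I_N.-1) with
  | Some k' => \sum_(j < r) s ord0 j * bitv (w (k', j)) (s + c j)
  | None => 0 end.

Definition getA (a : AA) (s : V) : 'F_2 :=
  match (insub s : option Vn) with Some s' => a s' | None => 0 end.

Definition EE (k : nat) (c : CC) (w : FL) : AA := [ffun s : Vn => Ef k c w (val s)].

Lemma Ef0 k c w : Ef k c w 0 = 0.
Proof. rewrite /Ef; case: insub => // k'; apply: big1 => j _; by rewrite mxE mul0r. Qed.

Lemma getE k c w s : getA (EE k c w) s = Ef k c w s.
Proof.
rewrite /getA; case: insubP => [s' Hs <- | ].
  by rewrite ffunE.
by rewrite negbK => /eqP ->; rewrite Ef0.
Qed.

Lemma getD a b s : getA (a + b) s = getA a s + getA b s.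
Proof. rewrite /getA; case: insub => [s'|]; by rewrite ?ffunE ?addr0. Qed.

Lemma getB a b s : getA (a - b) s = getA a s - getA b s.
Proof. rewrite /getA; case: insub => [s'|]; by rewrite ?ffunE ?subr0. Qed.

Lemma getA0 s : getA 0 s = 0.
Proof. rewrite /getA; case: insub => [s'|]; by rewrite ?ffunE. Qed.

Definition Delta (t : 'I_r) : CC := [ffun _ => delta_mx 0 t].

Lemma key (k' : 'I_N.-1) t c w s :
  Ef k' c w s + Ef k' (c + Delta t) w (s + delta_mx 0 t) = bitv (w (k', t)) (s + c t).
Proof.
rewrite /Ef valK -big_split /= (bigD1 t) //= big1 ?addr0.
  rewrite !ffunE !mxE !eqxx /= -addrA (addrCA (delta_mx 0 t)) V_dbl addr0.
  by rewrite -mulrDl addrA F2_dbl add0r mul1r.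
move=> j /negbTE jt; rewrite !ffunE !mxE jt /= addr0 -addrA (addrCA (delta_mx 0 t)) V_dbl addr0.
by rewrite -mulrDl F2_dbl mul0r.
Qed.

Lemma AA_dbl (a : AA) : a + a = 0.
Proof. by apply/ffunP => s; rewrite !ffunE F2_dbl. Qed.

Definition sdn (sd : Sd) (k : nat) : CC :=
  match (insub k : option 'I_N.-1) with Some k' => sd k' | None => 0 end.
Definition shift (th : FF) (k : nat) : CC := if k == val th.1 then Delta th.2 else 0.
Definition Phi (th : FF) (sd : Sd) : {ffun 'I_N -> QQ} :=
  [ffun i : 'I_N => (if val i == 0%N then 0 else sdn sd (val i).-1 + shift th (val i).-1,
                     sdn sd (val i))].
Definition ansf (i : 'I_N) (q : QQ) (w : FL) : AA :=
  (if val i == 0%N then 0 else EE (val i).-1 q.1 w) + EE (val i) q.2 w.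
Definition Anf (af : 'I_N -> AA) (i : nat) : AA :=
  match (insub i : option 'I_N) with Some i' => af i' | None => 0 end.
Definition decf (th : FF) (qs : {ffun 'I_N -> QQ}) (af : 'I_N -> AA) : file_t LL :=
  let k0 := val th.1 in let t := th.2 in
  let c := (qs (Ordinal (path_lt1 th.1))).2 t in
  let An := Anf af in
  let X := \sum_(i < k0.+1) An i in
  let Y := \sum_(i < N) An i - X in
  \row_(b < LL) (getA X (enum_val b + c) + getA Y (enum_val b + c + delta_mx 0 t)).

Lemma EE_big k c w : (N.-1 <= k)%N -> EE k c w = 0.
Proof.
move=> Hk; apply/ffunP => s; rewrite !ffunE /Ef insubN //.
by rewrite -leqNgt.
Qed.

Section Dec.
Variables (th : FF) (sd : Sd) (w : FL).
Let G (i : nat) : AA := (if i == 0%N then 0 else EE i.-1 (sdn sd i.-1 + shift th i.-1) w)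
   + EE i (sdn sd i) w.
Let P k := EE k (sdn sd k) w.
Let Q k := EE k (sdn sd k + shift th k) w.

Lemma telesc m : \sum_(i < m.+1) G i = \sum_(k < m) (P k + Q k) + P m.
Proof.
elim: m => [|m IH]; first by rewrite big_ord1 big_ord0 /G /= add0r.
rewrite big_ord_recr /= IH big_ord_recr /= /G /=.
by rewrite -!addrA (addrCA (P m)).
Qed.
Lemma PQ0 k : k != val th.1 -> P k + Q k = 0.
Proof. by move=> /negbTE H; rewrite /Q /shift H addr0 AA_dbl. Qed.

Lemma decode : (1 < N)%N ->
  decf th (Phi th sd) (fun i => ansf i (Phi th sd i) w) = w th.
Proof.
move=> HN.
have An : forall i, (i < N)%N -> Anf (fun i => ansf i (Phi th sd i) w) i = G i.
  move=> i Hi; rewrite /Anf insubT /ansf /= ffunE /=.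
  by rewrite /G; case: (i == 0%N).
rewrite /decf.
have -> : \sum_(i < (val th.1).+1) Anf (fun i => ansf i (Phi th sd i) w) i = P th.1.
  rewrite (eq_bigr (fun i : 'I_(val th.1).+1 => G i)); last first.
    move=> i _; apply: An; apply: leq_trans (ltn_ord i) _; exact: path_lt1.
  rewrite telesc big1 ?add0r // => k _; apply: PQ0; by rewrite neq_ltn ltn_ord.
have -> : \sum_(i < N) Anf (fun i => ansf i (Phi th sd i) w) i = P th.1 + Q th.1.
  rewrite (eq_bigr (fun i : 'I_N => G i)); last by move=> i _; apply: An.
  have := telesc N.-1; rewrite prednK ?(ltnW HN) // => ->.
  rewrite [P _]EE_big // addr0.
  rewrite (bigD1 th.1) //= big1 ?addr0 // => k Hk; apply: PQ0; exact: Hk.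
rewrite [P th.1 + _]addrC addrK ffunE /= /sdn valK /Q /P /shift eqxx /sdn valK.
have -> : w th = w (th.1, th.2) by case: th.
apply/rowP => b; rewrite mxE !getE key -addrA V_dbl addr0 /bitv enum_valK.
by [].
Qed.
End Dec.

Definition stor := @multigraph_stor N N.-1 r (@path_ends N).

Lemma Ef_restr (i : 'I_N) k c w s : (val i == k) || (val i == k.+1) ->
  Ef k c (restr stor i w) s = Ef k c w s.
Proof.
move=> Hik; rewrite /Ef; case: insubP => // k' _ Hk.
apply: eq_bigr => j _; rewrite /restr ffunE /stor /multigraph_stor /path_ends /=.
suff -> : (i == Ordinal (path_lt1 k')) || (i == Ordinal (path_lt2 k')) by [].
by rewrite -!(inj_eq val_inj) /= Hk.
Qed.

Lemma ans_restr i q w : ansf i q (restr stor i w) = ansf i q w.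
Proof.
rewrite /ansf; congr (_ + _).
  case: eqP => // Hi; apply/ffunP => s; rewrite !ffunE Ef_restr //.
  by rewrite prednK ?eqxx ?orbT // lt0n; apply/eqP.
by apply/ffunP => s; rewrite !ffunE Ef_restr // eqxx.
Qed.

Lemma Ef_add k c w w' s : Ef k c (w + w') s = Ef k c w s + Ef k c w' s.
Proof.
rewrite /Ef; case: insub => [k'|]; last by rewrite addr0.
rewrite -big_split; apply: eq_bigr => j _; by rewrite /bitv !ffunE mxE mulrDr.
Qed.

Lemma ans_add i q w w' : ansf i q (w + w') = ansf i q w + ansf i q w'.
Proof.
rewrite /ansf.
have HE : forall k c, EE k c (w + w') = EE k c w + EE k c w'.
  by move=> k c; apply/ffunP => s; rewrite !ffunE Ef_add.
rewrite !HE; case: (_ == _); rewrite ?addr0 ?add0r //.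
by rewrite -!addrA (addrCA (EE _ q.2 w)).
Qed.

Definition wa (k' : 'I_N.-1) (c : CC) (a : AA) : FL :=
  [ffun f : FF => if f.1 == k' then \row_(b < LL) (let s := enum_val b + c f.2 in
       if [pick j | s ord0 j != 0] == Some f.2 then getA a s else 0) else 0].

Lemma EE_wa (k' : 'I_N.-1) c a : EE k' c (wa k' c a) = a.
Proof.
apply/ffunP => s; rewrite ffunE /Ef valK.
have Hs : forall j, (val s + c j) + c j = val s by move=> j; rewrite -addrA V_dbl addr0.
rewrite (eq_bigr (fun j => (val s) ord0 j * (if [pick j0 | (val s) ord0 j0 != 0] == Some j
   then getA a (val s) else 0))); last first.
  by move=> j _; rewrite /bitv ffunE eqxx mxE enum_rankK Hs.
case: pickP => [j0 Hj0 | H0].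
  rewrite (bigD1 j0) //= eqxx big1 ?addr0; last by move=> j Hj; rewrite (inj_eq (@Some_inj _)) eq_sym (negbTE Hj) mulr0.
  case: (F2_cases (val s ord0 j0)) Hj0 => -> //= _.
  by rewrite mul1r /getA valK.
exfalso; clear Hs; case: s H0 => s /= Hs0 H0; move: Hs0; rewrite -[_ != _]/(~~ _) => /eqP; apply.
by apply/rowP => j; rewrite mxE; move: (H0 j) => /negbFE/eqP.
Qed.

Lemma EE_wa_other k (k' : 'I_N.-1) c c' a : k != val k' -> EE k c' (wa k' c a) = 0.
Proof.
move=> Hk; apply/ffunP => s; rewrite !ffunE /Ef; case: insubP => // k'' _ Hk''.
apply: big1 => j _; rewrite /bitv ffunE /=.
have -> : (k'' == k') = false by apply/negbTE; rewrite -(inj_eq val_inj) Hk''.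
by rewrite mxE mulr0.
Qed.

Lemma ans_surj : (1 < N)%N -> forall i q a, exists w, ansf i q w = a.
Proof.
move=> HN i q a.
case: (ltnP (val i) N.-1) => Hi.
  exists (wa (Ordinal Hi) q.2 a); rewrite /ansf.
  have /= -> := EE_wa (Ordinal Hi) q.2 a.
  case: eqP => Hi0; first by rewrite add0r.
  rewrite EE_wa_other ?add0r //=.
  by apply/eqP; move: Hi0; case: (val i).
have Hi0 : val i != 0%N by rewrite -lt0n (leq_trans _ Hi) // -ltnS prednK // ltnW.
have Hi1 : ((val i).-1 < N.-1)%N.
  by rewrite -ltnS prednK ?lt0n // prednK ?(ltnW HN) // ltn_ord.
exists (wa (Ordinal Hi1) q.1 a); rewrite /ansf (negbTE Hi0).
have /= -> := EE_wa (Ordinal Hi1) q.1 a.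
by rewrite EE_big // addr0.
Qed.
End Sch.

Section Prob.
Variables (N r : nat) (R : realType).
Local Notation Sd := (Sd N r).
Local Notation FL := (FL N r).
Local Notation AA := (AA r).
Local Notation FF := (FF N r).
Local Notation QQ := (QQ r).

Definition qd (th : FF) : {ffun {ffun 'I_N -> QQ} -> R} :=
  [ffun qs => \sum_(sd : Sd) (Phi th sd == qs)%:R / #|{: Sd}|%:R].
Definition SS : scheme R N FF (LL r) := @Scheme R N FF (LL r) QQ AA qd (@ansf N r) (@decf N r).

Lemma push th (g : {ffun 'I_N -> QQ} -> R) :
  \sum_qs qd th qs * g qs = #|{: Sd}|%:R^-1 * \sum_(sd : Sd) g (Phi th sd).
Proof.
rewrite mulr_sumr.
under eq_bigr do rewrite ffunE mulr_suml.
rewrite exchange_big /=; apply: eq_bigr => sd _.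
rewrite (bigD1 (Phi th sd)) //= eqxx big1 ?addr0 ?mul1r //.
move=> qs /negbTE H; by rewrite eq_sym H mul0r mul0r.
Qed.

Lemma card_pos (T : finType) (x : T) : (0 : R) < #|{: T}|%:R.
Proof. rewrite ltr0n; apply/card_gt0P; by exists x. Qed.

Lemma fiber i q a : (1 < N)%N ->
  \sum_(w : FL) (ansf i q w == a)%:R = #|{: FL}|%:R / #|{: AA}|%:R :> R.
Proof.
move=> HN.
have Hf : forall b, \sum_(w : FL) (ansf i q w == b)%:R = \sum_(w : FL) (ansf i q w == 0)%:R :> R.
  move=> b; have [wb Hb] := ans_surj HN i q b.
  rewrite (reindex_inj (addIr wb)) /=; apply: eq_bigr => w _.
  by rewrite ans_add Hb -{2}(add0r b) (inj_eq (addIr b)).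
have Hs : \sum_(b : AA) \sum_(w : FL) (ansf i q w == b)%:R = #|{: FL}|%:R :> R.
  rewrite exchange_big /= -sumr_const; apply: eq_bigr => w _.
  rewrite (bigD1 (ansf i q w)) //= eqxx big1 ?addr0 // => b /negbTE H.
  by rewrite eq_sym H.
move: Hs; under eq_bigr do rewrite Hf; rewrite sumr_const => <-.
rewrite Hf -[X in X / _]mulr_natr mulfK //; rewrite pnatr_eq0 -lt0n; apply/card_gt0P; by exists 0.
Qed.

Lemma prob_ans_E th i a : (1 < N)%N -> prob_ans (S:=SS) th i a = #|{: AA}|%:R^-1.
Proof.
move=> HN; rewrite /prob_ans /=.
under eq_bigr do rewrite -mulr_sumr -mulrA.
rewrite push /=.
under eq_bigr do rewrite fiber //.
rewrite sumr_const -mulr_natr /unif.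
have h1 := card_pos (0 : Sd); have h2 := card_pos (0 : FL); have h3 := card_pos (0 : AA).
field; rewrite !gt_eqF //.
Qed.

Lemma entropy_E th i : (1 < N)%N -> entropy_ans SS th i = log2 (#|{: AA}|%:R : R).
Proof.
move=> HN; rewrite /entropy_ans.
under eq_bigr do rewrite /= prob_ans_E //.
have h3 := card_pos (0 : AA).
rewrite sumr_const invr_eq0 (gt_eqF h3) /log2 lnV; last by rewrite posrE.
rewrite -mulr_natr; field.
rewrite !gt_eqF // ln_gt0 //; by rewrite ltr1n.
Qed.

Definition Psi (sd : Sd) (i : 'I_N) : QQ :=
  (if val i == 0%N then 0 else sdn sd (val i).-1, sdn sd (val i)).

Lemma Phi_Psi th i : exists2 h : Sd -> Sd, injective h & forall sd, Phi th (h sd) i = Psi sd i.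
Proof.
case: i => i Hi.
pose D : Sd := [ffun k : 'I_N.-1 => if (val k == i.-1) && (i != 0%N)
   then - shift th (val k) else 0].
exists (fun sd => sd + D); first exact: addIr.
move=> sd; rewrite /Phi ffunE /Psi /=; case: eqP => Hi0 /=.
  congr (_, _); rewrite /sdn; case: insub => // k; rewrite !ffunE Hi0 /= andbF addr0 //.
congr (_, _); rewrite /sdn.
  case: insubP => [k _ Hk | Hn]; last by exfalso; move: Hn; apply/negP/negPn; lia.
  by rewrite !ffunE Hk eqxx /=; move/eqP: Hi0 => ->; rewrite subrK.
case: insubP => [k _ Hk | //]; rewrite !ffunE Hk.
have -> : (i == i.-1) = false by apply/negbTE; lia.
by rewrite addr0.
Qed.

Lemma view_E th i q a v : prob_view (@stor N r) (S:=SS) th i q a v =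
  #|{: Sd}|%:R^-1 * \sum_(sd : Sd) \sum_(w : FL) unif R FF (LL r) *
    ((Psi sd i == q) && (ansf i (Psi sd i) w == a) && (restr (@stor N r) i w == v))%:R.
Proof.
rewrite /prob_view /=.
under eq_bigr do (under eq_bigr do rewrite -mulrA; rewrite -mulr_sumr).
rewrite push; congr (_ * _).
have [h hinj hP] := Phi_Psi th i.
rewrite (reindex_inj hinj); apply: eq_bigr => sd _.
by rewrite hP.
Qed.

Lemma valid : (1 < N)%N -> valid_scheme (@stor N r) SS.
Proof.
move=> HN; split.
- move=> th qs /=; rewrite ffunE; apply: sumr_ge0 => sd _; apply: divr_ge0; exact: ler0n.
- move=> th; have := push th (fun _ => 1); under eq_bigr do rewrite mulr1.
  move=> -> /=; rewrite sumr_const mulVf // gt_eqF // ltr0n; apply/card_gt0P; by exists 0.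
- move=> i q w w' H /=; by rewrite -ans_restr H ans_restr.
- move=> th qs w /= Hq.
  have [sd Hsd] : exists sd, Phi th sd = qs.
    case: (pickP (fun sd => Phi th sd == qs)) => [sd /eqP H | Hn]; first by exists sd.
    move: Hq; rewrite /= ffunE big1 ?ltxx // => sd _.
    by rewrite Hn mul0r.
  by rewrite -Hsd decode.
- move=> i th th' q a v; by rewrite !view_E.
Qed.
End Prob.

Lemma card_AA r : #|{: AA r}| = (2 ^ (2 ^ r).-1)%N.
Proof.
rewrite card_ffun card_sig card_Fp //.
have -> : #|[pred x : V r | x != 0]| = #|predC1 (0 : V r)|.
  by apply: eq_card => x; rewrite !inE.
by rewrite cardC1 card_mx card_Fp // mul1n.
Qed.

Lemma card_V r : LL r = (2 ^ r)%N.
Proof. by rewrite /LL card_mx card_Fp // mul1n. Qed.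

Lemma log2_pow (R : realType) n : log2 ((2 ^ n)%N%:R : R) = n%:R.
Proof.
rewrite /log2 natrX lnXn ?ltr0n // -[X in X / _]mulr_natr mulrAC mulfV ?mul1r //.
by rewrite gt_eqF // ln_gt0 // ltr1n.
Qed.

Theorem mainTheorem4 (R : realType) (N r : nat) :
  (2 <= N)%N -> (1 <= r)%N ->
  ((2 / N%:R * (2 - (2 ^+ r.-1)^-1)^-1 : R)%:E
     <= capacity_multigraph R (@path_ends N) r)%E.
Proof.
move=> HN Hr.
pose x : R := (LL r)%:R / (N%:R * log2 (#|{: AA r}|%:R : R)).
have Hx : rates (@stor N r) x.
  exists (LL r), (@SS N r R); split; first exact: valid.
  move=> th; rewrite /x; congr (_ / _).
  under eq_bigr do rewrite entropy_E //.
  by rewrite sumr_const card_ord mulr_natl.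
apply: le_trans (ereal_sup_ubound _); last by exists x.
rewrite lee_fin /x card_AA log2_pow card_V; clear Hx x.
case: r Hr => // r _ /=.
rewrite expnS natrM natrX.
have -> : ((2 * 2 ^ r).-1)%:R = 2 * 2%:R ^+ r - 1 :> R.
  rewrite -natrX -natrM -subn1 natrB ?muln_gt0 ?expn_gt0 //.
have hy : 1 <= (2 : R) ^+ r by rewrite exprn_ege1 // ler1n.
have hN : (0 : R) < N%:R by rewrite ltr0n; lia.
rewrite le_eqVlt; apply/orP; left; apply/eqP.
have h1 : (2 : R) ^+ r != 0 by rewrite gt_eqF // (lt_le_trans _ hy).
have h2 : 2 * (2 : R) ^+ r - 1 != 0 by rewrite gt_eqF // subr_gt0; lra.
have h3 : 2 - ((2 : R) ^+ r)^-1 != 0.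
  rewrite gt_eqF // subr_gt0 (le_lt_trans _ (_ : 1 < 2)) ?ltr1n // invr_le1 //.
  by rewrite unitfE.
field; rewrite ?h1 ?h2 ?h3 ?gt_eqF //.
Qed.
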